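(* Let $G_0,G_1\in\mathbb{Z}$ and let $(G_n)_{n\ge 0}$ be defined by $G_n=G_{n-1}+G_{n-2}$ for $n\ge 2$. For every integer $k \geq 1$, $$\mathcal{G}^2_{G_0,G_1}(k) = \gcd\left(G_k G_{k+1} - G_0 G_1,\; G_{k+1}^2 - G_1^2,\; G_{k+2}^2 - G_2^2\right),$$ where $\mathcal{G}^2_{G_0,G_1}(k)$ denotes the greatest common divisor of all the integers $\sum_{i=1}^k G_{n+i}^2$ for $n \ge 0$.
   Context: $(G_n)_{n\ge0}$ is a generalized Fibonacci (Gibonacci) sequence with arbitrary integer initial values $G_0,G_1$. $\mathcal{G}^2_{G_0,G_1}(k)=\gcd\{\sum_{i=1}^k G_{n+i}^2 : n\ge 0\}$, the gcd of the infinitely many sums of $k$ consecutive squares starting after index $n$ (taken nonnegative). *)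

(* Defs.v *)
From Stdlib Require Import ZArith List.
Open Scope Z_scope.

Fixpoint gib (G0 G1 : Z) (n : nat) : Z :=
  match n with
  | O => G0
  | S O => G1
  | S ((S m) as p) => gib G0 G1 p + gib G0 G1 m
  end.

Definition sq_block (G0 G1 : Z) (k n : nat) : Z :=
  fold_right Z.add 0
    (map (fun i => (gib G0 G1 (n + i)) ^ 2) (seq 1 k)).

Definition is_gcd_of_family (f : nat -> Z) (d : Z) : Prop :=
  0 <= d /\ (forall n, (d | f n)) /\
  (forall c, (forall n, (c | f n)) -> (c | d)).

Definition GibSqGcd (G0 G1 : Z) (k : nat) (d : Z) : Prop :=
  is_gcd_of_family (sq_block G0 G1 k) d.

Example gib_test : map (gib 0 1) (seq 0 8) = (0::1::1::2::3::5::8::13::nil)%list.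
Proof. reflexivity. Qed.
Lemma gib_rec : forall G0 G1 n, gib G0 G1 (S (S n)) = gib G0 G1 (S n) + gib G0 G1 n.
Proof. reflexivity. Qed.
Example sq_test : sq_block 0 1 2 1 = 1 + 4.
Proof. reflexivity. Qed.

(* Main.v *)
Require Import Defs.
From Stdlib Require Import ZArith List Lia.
Open Scope Z_scope.

Lemma g2 G0 G1 m : gib G0 G1 (m + 2) = gib G0 G1 (m + 1) + gib G0 G1 m.
Proof. replace (m + 2)%nat with (S (S m)) by lia. replace (m+1)%nat with (S m) by lia. reflexivity. Qed.

Lemma sq_block_S G0 G1 k n :
  sq_block G0 G1 (S k) n = gib G0 G1 (n + 1) ^ 2 + sq_block G0 G1 k (n + 1).
Proof.
  unfold sq_block. simpl. f_equal.
  rewrite <- seq_shift, map_map. f_equal. apply map_ext. intro i. f_equal. f_equal. lia.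
Qed.

Lemma sq_block_eq G0 G1 k : forall n,
  sq_block G0 G1 k n = gib G0 G1 (n + k) * gib G0 G1 (n + k + 1)
                        - gib G0 G1 n * gib G0 G1 (n + 1).
Proof.
  induction k as [|k IH]; intro n.
  - unfold sq_block. simpl. rewrite Nat.add_0_r. ring.
  - rewrite sq_block_S, IH.
    replace (n + 1 + k)%nat with (n + S k)%nat by lia.
    replace (n + 1 + 1)%nat with (n + 2)%nat by lia.
    rewrite (g2 G0 G1 n). ring.
Qed.

Lemma P_rec G0 G1 m :
  gib G0 G1 (m + 3) * gib G0 G1 (m + 3 + 1) =
  2 * (gib G0 G1 (m + 2) * gib G0 G1 (m + 2 + 1))
  + 2 * (gib G0 G1 (m + 1) * gib G0 G1 (m + 1 + 1))
  - gib G0 G1 m * gib G0 G1 (m + 1).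
Proof.
  assert (h2 := g2 G0 G1 m).
  assert (h3 := g2 G0 G1 (m+1)). replace (m+1+2)%nat with (m+3)%nat in h3 by lia.
  replace (m+1+1)%nat with (m+2)%nat in h3 by lia.
  assert (h4 := g2 G0 G1 (m+2)). replace (m+2+2)%nat with (m+3+1)%nat in h4 by lia.
  replace (m+2+1)%nat with (m+3)%nat in h4 by lia.
  replace (m+2+1)%nat with (m+3)%nat by lia. replace (m+1+1)%nat with (m+2)%nat by lia.
  rewrite h4, h3, h2. ring.
Qed.

Lemma S_rec G0 G1 k n :
  sq_block G0 G1 k (n + 3) = 2 * sq_block G0 G1 k (n + 2) + 2 * sq_block G0 G1 k (n + 1)
    - sq_block G0 G1 k n.
Proof.
  rewrite !sq_block_eq.
  replace (n + 3 + k)%nat with ((n + k) + 3)%nat by lia.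
  replace (n + 2 + k)%nat with ((n + k) + 2)%nat by lia.
  replace (n + 1 + k)%nat with ((n + k) + 1)%nat by lia.
  replace (n + 3 + 1)%nat with (n + 3 + 1)%nat by lia.
  rewrite (P_rec G0 G1 (n+k)), (P_rec G0 G1 n).
  replace (n+1+1)%nat with (n+2)%nat by lia.
  replace (n+2+1)%nat with (n+3)%nat by lia.
  replace (n+k+1+1)%nat with (n+k+2)%nat by lia.
  replace (n+k+2+1)%nat with (n+k+3)%nat by lia.
  ring.
Qed.

Theorem theorem3p4 (G0 G1 : Z) (k : nat) (hk : (1 <= k)%nat) :
  GibSqGcd G0 G1 k
    (Z.gcd (Z.gcd (gib G0 G1 k * gib G0 G1 (k + 1) - G0 * G1)
                  (gib G0 G1 (k + 1) ^ 2 - G1 ^ 2))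
           (gib G0 G1 (k + 2) ^ 2 - gib G0 G1 2 ^ 2)).
Proof.
  set (A := gib G0 G1 k * gib G0 G1 (k + 1) - G0 * G1).
  set (B := gib G0 G1 (k + 1) ^ 2 - G1 ^ 2).
  set (C := gib G0 G1 (k + 2) ^ 2 - gib G0 G1 2 ^ 2).
  assert (E0 : sq_block G0 G1 k 0 = A).
  { rewrite sq_block_eq. simpl. unfold A. reflexivity. }
  assert (E1 : sq_block G0 G1 k 1 = A + B).
  { rewrite sq_block_eq. unfold A, B.
    replace (1 + k + 1)%nat with (k + 2)%nat by lia.
    replace (1 + k)%nat with (k + 1)%nat by lia.
    rewrite (g2 G0 G1 k). change (gib G0 G1 2) with (G1+G0); change (gib G0 G1 1) with G1. change (gib G0 G1 (1+1)) with (G1+G0). ring. }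
  assert (E2 : sq_block G0 G1 k 2 = A + B + C).
  { rewrite sq_block_eq. unfold A, B, C.
    replace (2 + k + 1)%nat with ((k + 1) + 2)%nat by lia.
    replace (2 + k)%nat with (k + 2)%nat by lia.
    rewrite (g2 G0 G1 (k+1)). replace (k+1+1)%nat with (k+2)%nat by lia.
    rewrite (g2 G0 G1 k). change (gib G0 G1 2) with (G1+G0); change (gib G0 G1 1) with G1. change (gib G0 G1 (2+1)) with (G1+G0+G1). ring. }
  set (d := Z.gcd (Z.gcd A B) C).
  assert (dA : (d | A)) by (eapply Z.divide_trans; [apply Z.gcd_divide_l|apply Z.gcd_divide_l]).
  assert (dB : (d | B)) by (eapply Z.divide_trans; [apply Z.gcd_divide_l|apply Z.gcd_divide_r]).
  assert (dC : (d | C)) by apply Z.gcd_divide_r.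
  split; [apply Z.gcd_nonneg|split].
  - assert (H : forall n, (d | sq_block G0 G1 k n) /\ (d | sq_block G0 G1 k (n+1))
                          /\ (d | sq_block G0 G1 k (n+2))).
    { induction n as [|n [H0 [H1 H2]]].
      - simpl. rewrite E0, E1, E2.
        split; [|split]; auto; [apply Z.divide_add_r|apply Z.divide_add_r; [apply Z.divide_add_r|]]; auto.
      - replace (S n) with (n+1)%nat by lia.
        replace (n+1+1)%nat with (n+2)%nat by lia.
        replace (n+1+2)%nat with (n+3)%nat by lia.
        repeat split; auto. rewrite S_rec.
        apply Z.divide_sub_r; [apply Z.divide_add_r|]; auto;
        apply Z.divide_mul_r; auto. }
    intro n. apply H.
  - intros c Hc. pose proof (Hc 0%nat) as c0. pose proof (Hc 1%nat) as c1.
    pose proof (Hc 2%nat) as c2. rewrite E0 in c0. rewrite E1 in c1. rewrite E2 in c2.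
    assert (cB : (c | B)) by (replace B with (A + B - A) by ring; apply Z.divide_sub_r; auto).
    assert (cC : (c | C)) by (replace C with (A + B + C - (A + B)) by ring; apply Z.divide_sub_r; auto).
    apply Z.gcd_greatest; auto. apply Z.gcd_greatest; auto.
Qed.
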